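(* Let $d\ge2$, $0<\gamma<1$, and let $D\subset\mathbb{R}^d$ be a $C^{1+\gamma}$ domain with defining function $\Phi$. If $\delta>0$ satisfies $$\delta^\gamma\frac{\|\nabla\Phi\|_\gamma}{|\nabla\Phi|_{\inf}}\le\frac12,$$ then for each $x\in\partial D$, the set $\partial D\cap B(x,\delta)$ is, after a rotation around $x$, the graph of a $C^{1+\gamma}$ function (of $d-1$ variables), and $D\cap B(x,\delta)$ is the part of $B(x,\delta)$ lying below this graph.
   Context: A defining function is $\Phi\in C^{1+\gamma}(\mathbb{R}^d)$ with $D=\{\Phi<0\}$, $\partial D=\{\Phi=0\}$ and $\nabla\Phi\ne0$ on $\partial D$. $|\nabla\Phi|_{\inf}=\inf_{x\in\partial D}|\nabla\Phi(x)|$ and $\|\nabla\Phi\|_\gamma=\sup_{x_1\ne x_2}|\nabla\Phi(x_1)-\nabla\Phi(x_2)|/|x_1-x_2|^\gamma$. *)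

(* Defs.v *)
From HB Require Import structures.
From mathcomp Require Import all_boot all_order all_algebra.
From mathcomp Require Import all_classical all_reals all_analysis.
Set Implicit Arguments. Unset Strict Implicit. Unset Printing Implicit Defensive.
Import Order.TTheory GRing.Theory Num.Theory.
Import numFieldNormedType.Exports.
Local Open Scope classical_set_scope.
Local Open Scope ring_scope.

Definition enorm (R : realType) (k : nat) (v : 'rV[R]_k) : R :=
  Num.sqrt (\sum_(i < k) v ord0 i ^+ 2).

Definition grad (R : realType) (k : nat) (f : 'rV[R]_k -> R) (x : 'rV[R]_k)
  : 'rV[R]_k :=
  \row_(i < k) ('D_(delta_mx 0 i) f x).

Definition C1gamma_on (R : realType) (k : nat) (U : set 'rV[R]_k) (gamma : R)
  (f : 'rV[R]_k -> R) : Prop :=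
  (forall x, U x -> differentiable f x) /\
  exists H : R, forall x1 x2, U x1 -> U x2 ->
    enorm (grad f x1 - grad f x2) <= H * (enorm (x1 - x2)) `^ gamma.

Definition holder_semi (R : realType) (k : nat) (gamma : R)
  (f : 'rV[R]_k -> R) : R :=
  sup [set r | exists x1 x2 : 'rV[R]_k, x1 != x2 /\
         r = enorm (grad f x1 - grad f x2) / (enorm (x1 - x2)) `^ gamma].

(* |grad Phi|_inf = inf_{x in boundary D} |grad Phi(x)|, with boundary D = {Phi = 0} *)
Definition grad_inf (R : realType) (k : nat) (f : 'rV[R]_k -> R) : R :=
  inf [set r | exists x : 'rV[R]_k, f x = 0 /\ r = enorm (grad f x)].

(* Main.v *)
From HB Require Import structures.
From mathcomp Require Import all_boot all_order all_algebra.
From mathcomp Require Import all_classical all_reals all_analysis.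
From mathcomp Require Import ring lra.
Require Import Defs.
Import Order.TTheory GRing.Theory Num.Theory.
Import numFieldNormedType.Exports.
Local Open Scope classical_set_scope.
Local Open Scope ring_scope.
Set Implicit Arguments. Unset Strict Implicit. Unset Printing Implicit Defensive.

Section Enorm.
Variables (R : realType) (k : nat).
Implicit Types (u v w : 'rV[R]_k).

Definition dot u v : R := (u *m v^T) 0 0.

Lemma dotE u v : dot u v = \sum_(i < k) u 0 i * v 0 i.
Proof. by rewrite /dot mxE; apply: eq_bigr => i _; rewrite mxE. Qed.

Lemma dotC u v : dot u v = dot v u.
Proof. by rewrite !dotE; apply: eq_bigr => i _; rewrite mulrC. Qed.

Lemma dotDl u v w : dot (u + v) w = dot u w + dot v w.
Proof. by rewrite /dot mulmxDl mxE. Qed.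
Lemma dotDr u v w : dot w (u + v) = dot w u + dot w v.
Proof. by rewrite !(dotC w) dotDl. Qed.
Lemma dotNl u v : dot (- u) v = - dot u v.
Proof. by rewrite /dot mulNmx mxE. Qed.
Lemma dotNr u v : dot u (- v) = - dot u v.
Proof. by rewrite !(dotC u) dotNl. Qed.
Lemma dotBl u v w : dot (u - v) w = dot u w - dot v w.
Proof. by rewrite dotDl dotNl. Qed.
Lemma dotBr u v w : dot w (u - v) = dot w u - dot w v.
Proof. by rewrite dotDr dotNr. Qed.
Lemma dotZl (c : R) u v : dot (c *: u) v = c * dot u v.
Proof. by rewrite /dot -scalemxAl mxE. Qed.
Lemma dotZr (c : R) u v : dot u (c *: v) = c * dot u v.
Proof. by rewrite !(dotC u) dotZl. Qed.
Lemma dot0l v : dot 0 v = 0.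
Proof. by rewrite /dot mul0mx mxE. Qed.

Lemma dotQ (Q : 'M[R]_k) u v : Q *m Q^T = 1%:M -> dot (u *m Q) (v *m Q) = dot u v.
Proof. by move=> hQ; rewrite /dot trmx_mul mulmxA -(mulmxA u) hQ mulmx1. Qed.

Lemma dotQT (Q : 'M[R]_k) u v : dot u (v *m Q) = dot (u *m Q^T) v.
Proof. by rewrite /dot trmx_mul mulmxA. Qed.

Lemma dot_ge0 v : 0 <= dot v v.
Proof. by rewrite dotE sumr_ge0 // => i _; rewrite -expr2 sqr_ge0. Qed.

Lemma enormE v : enorm v = Num.sqrt (dot v v).
Proof. by rewrite /enorm dotE; congr Num.sqrt; apply: eq_bigr => i _; rewrite expr2. Qed.

Lemma enorm_ge0 v : 0 <= enorm v.
Proof. by rewrite enormE sqrtr_ge0. Qed.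

Lemma enorm_sq v : enorm v ^+ 2 = dot v v.
Proof. by rewrite enormE sqr_sqrtr // dot_ge0. Qed.

Lemma dot_eq0 {v} : dot v v = 0 -> v = 0.
Proof.
rewrite dotE => h; apply/rowP => i; rewrite mxE.
have hi : v 0 i * v 0 i = 0.
  by apply: (psumr_eq0P _ h) => // j _; rewrite -expr2 sqr_ge0.
by move/eqP: hi; rewrite mulf_eq0 orbb => /eqP.
Qed.

Lemma enorm_eq0 {v} : enorm v = 0 -> v = 0.
Proof. by move=> h; apply: dot_eq0; rewrite -enorm_sq h expr0n. Qed.

Lemma enorm_gt0 v : v != 0 -> 0 < enorm v.
Proof.
move=> hv; rewrite lt_neqAle enorm_ge0 andbT; apply/eqP => h.
by move: hv; rewrite (enorm_eq0 (esym h)) eqxx.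
Qed.

Lemma enorm0 : enorm (0 : 'rV[R]_k) = 0.
Proof. by rewrite enormE dot0l sqrtr0. Qed.

Lemma CS_le u v : dot u v <= enorm u * enorm v.
Proof.
set A := enorm u; set B := enorm v.
have [A0|Apos] := eqVneq A 0.
  by rewrite (enorm_eq0 A0) dot0l A0 mul0r.
have [B0|Bpos] := eqVneq B 0.
  by rewrite (enorm_eq0 B0) dotC dot0l B0 mulr0.
have hA : 0 < A by rewrite lt_neqAle eq_sym Apos enorm_ge0.
have hB : 0 < B by rewrite lt_neqAle eq_sym Bpos enorm_ge0.
have key : 2 * A * B * dot u v <= B ^+ 2 * dot u u + A ^+ 2 * dot v v.
  rewrite !dotE !mulr_sumr -big_split /=; apply: ler_sum => i _.
  have := sqr_ge0 (B * u 0 i - A * v 0 i); set a := u 0 i; set b := v 0 i.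
  by move=> h; nra.
rewrite -!enorm_sq -/A -/B in key.
have hAB : 0 < A * B by rewrite mulr_gt0.
rewrite -(ler_pM2l hAB); nra.
Qed.

Lemma CS u v : `|dot u v| <= enorm u * enorm v.
Proof.
have := CS_le u v; have := CS_le u (- v).
rewrite dotNr; have -> : enorm (- v) = enorm v.
  by rewrite !enormE dotNl dotNr opprK.
move=> h1 h2; rewrite ler_norml h2 andbT; lra.
Qed.

Lemma enormN v : enorm (- v) = enorm v.
Proof. by rewrite !enormE dotNl dotNr opprK. Qed.

Lemma enormB u v : enorm (u - v) = enorm (v - u).
Proof. by rewrite -enormN opprB. Qed.

Lemma enormZ (c : R) v : enorm (c *: v) = `|c| * enorm v.
Proof.
by rewrite !enormE dotZl dotZr mulrA sqrtrM ?sqr_ge0 // -expr2 sqrtr_sqr.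
Qed.

Lemma enormD u v : enorm (u + v) <= enorm u + enorm v.
Proof.
have h : dot (u + v) (u + v) <= (enorm u + enorm v) ^+ 2.
  rewrite dotDl !dotDr sqrrD !enorm_sq (dotC v u).
  have := CS_le u v; lra.
rewrite enormE -(ger0_norm (addr_ge0 (enorm_ge0 u) (enorm_ge0 v))) -sqrtr_sqr.
by rewrite ler_sqrt // sqr_ge0.
Qed.

Lemma enormQ (Q : 'M[R]_k) v : Q *m Q^T = 1%:M -> enorm (v *m Q) = enorm v.
Proof. by move=> hQ; rewrite !enormE dotQ. Qed.

Lemma enorm_coord v i : `|v 0 i| <= enorm v.
Proof.
rewrite -(ger0_norm (enorm_ge0 v)) -ler_sqr ?nnegrE // !real_normK ?num_real //.
rewrite enorm_sq dotE (bigD1 i) //= -expr2 lerDl sumr_ge0 // => j _.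
by rewrite -expr2 sqr_ge0.
Qed.

Lemma mxnorm_le_enorm v : `|v| <= enorm v.
Proof.
rewrite (_ : `|v| = mx_norm v) // mx_normrE; apply: bigmax_le; first exact: enorm_ge0.
by move=> [i j] _ /=; rewrite ord1; apply: enorm_coord.
Qed.

Lemma enorm_le_mxnorm v : enorm v <= k%:R * `|v|.
Proof.
have hc i : `|v 0 i| <= `|v|.
  rewrite (_ : `|v| = mx_norm v) // mx_normrE.
  exact: (le_bigmax _ (fun ij : 'I_1 * 'I_k => `|v ij.1 ij.2|) (ord0, i)).
have h0 : 0 <= `|v| by rewrite normr_ge0.
rewrite -(ger0_norm (enorm_ge0 v)) -(ger0_norm (mulr_ge0 (ler0n _ _) h0)).
rewrite -ler_sqr ?nnegrE // !real_normK ?num_real // enorm_sq dotE.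
apply: (@le_trans _ _ (\sum_(i < k) `|v|^+2)).
  apply: ler_sum => i _; rewrite -expr2 -real_normK ?num_real //.
  by rewrite lerXn2r ?nnegrE ?normr_ge0 // hc.
rewrite sumr_const card_ord -[_ *+ k]mulr_natr exprMn [X in _ <= X]mulrC ler_wpM2l ?sqr_ge0 //.
rewrite -natrX ler_nat; case: (k) => // k'.
by rewrite expnS leq_pmulr // expn_gt0.
Qed.

End Enorm.

Lemma dot_mx (R : realType) k (u v : 'rV[R]_k) : u *m v^T = (dot u v)%:M.
Proof. by apply/matrixP => i j; rewrite !ord1 [RHS]mxE eqxx mulr1n. Qed.

Lemma dot_scal (R : realType) (s t : R) : dot (s%:M : 'rV_1) (t%:M) = s * t.
Proof. by rewrite /dot tr_scalar_mx -scalar_mxM mxE eqxx mulr1n. Qed.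

Section Rows.
Variables (R : realType) (n : nat).
Implicit Types (t s : R) (z w : 'rV[R]_n).

Lemma dot_row (a c : 'rV[R]_1) (b d : 'rV[R]_n) :
  dot (row_mx a b) (row_mx c d) = dot a c + dot b d.
Proof. by rewrite /dot tr_row_mx mul_row_col mxE. Qed.

Definition pr t z : 'rV[R]_(1 + n) := row_mx (t%:M : 'rV_1) z.

Lemma pr_sq t z : enorm (pr t z) ^+ 2 = t ^+ 2 + enorm z ^+ 2.
Proof. by rewrite !enorm_sq dot_row dot_scal expr2. Qed.

Lemma pr_le t z : enorm (pr t z) <= `|t| + enorm z.
Proof.
rewrite -(ger0_norm (enorm_ge0 _)) -(ger0_norm (addr_ge0 (normr_ge0 t) (enorm_ge0 z))).
rewrite -ler_sqr ?nnegrE // !real_normK ?num_real // pr_sq sqrrD -(real_normK (num_real t)).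
have := mulr_ge0 (normr_ge0 t) (enorm_ge0 z); lra.
Qed.

Lemma pr_ge_t t z : `|t| <= enorm (pr t z).
Proof.
rewrite -(ger0_norm (enorm_ge0 (pr t z))) -ler_sqr ?nnegrE // !real_normK ?num_real //.
by rewrite pr_sq lerDl sqr_ge0.
Qed.

Lemma pr_ge_z t z : enorm z <= enorm (pr t z).
Proof.
rewrite -(ger0_norm (enorm_ge0 (pr t z))) -(ger0_norm (enorm_ge0 z)).
rewrite -ler_sqr ?nnegrE // !real_normK ?num_real //.
by rewrite pr_sq lerDr sqr_ge0.
Qed.

Lemma prB t z s w : pr t z - pr s w = pr (t - s) (z - w).
Proof. by rewrite /pr opp_row_mx add_row_mx raddfB. Qed.

Lemma prD t z s w : pr t z + pr s w = pr (t + s) (z + w).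
Proof. by rewrite /pr add_row_mx raddfD. Qed.

Lemma prZ c t z : c *: pr t z = pr (c * t) (c *: z).
Proof. by rewrite /pr scale_row_mx scale_scalar_mx. Qed.

Lemma pr_split t z : pr t z = pr 0 z + t *: pr 1 0.
Proof. by rewrite prZ mulr1 scaler0 prD add0r addr0. Qed.

Lemma dot_e0 v : dot (pr 1 0) v = (lsubmx v) 0 0.
Proof.
by rewrite -[v]hsubmxK dot_row dotC dot0l addr0 row_mxKl /dot tr_scalar_mx mul_mx_scalar scale1r.
Qed.

Lemma dot_e0_pr t z : dot (pr 1 0) (pr t z) = t.
Proof. by rewrite dot_e0 /pr row_mxKl mxE eqxx mulr1n. Qed.

Lemma dot_pr (a : 'rV[R]_(1 + n)) t z :
  dot a (pr t z) = (lsubmx a) 0 0 * t + dot (rsubmx a) z.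
Proof.
rewrite -[a]hsubmxK dot_row row_mxKl row_mxKr; congr (_ + _).
by rewrite /dot tr_scalar_mx mul_mx_scalar mxE mulrC.
Qed.

End Rows.

Section Sub.
Variables (R : realType) (n : nat).
Lemma enorm_rsub (v : 'rV[R]_(1 + n)) : enorm (rsubmx v) <= enorm v.
Proof.
rewrite -(ger0_norm (enorm_ge0 v)) -(ger0_norm (enorm_ge0 (rsubmx v))).
rewrite -ler_sqr ?nnegrE // !real_normK ?num_real // !enorm_sq.
by rewrite -{3 4}[v]hsubmxK dot_row lerDr dot_ge0.
Qed.
Lemma enorm_lsub (v : 'rV[R]_(1 + n)) : `|lsubmx v 0 0| <= enorm v.
Proof.
apply: le_trans (enorm_coord _ _) _.
rewrite -(ger0_norm (enorm_ge0 v)) -(ger0_norm (enorm_ge0 (lsubmx v))).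
rewrite -ler_sqr ?nnegrE // !real_normK ?num_real // !enorm_sq.
by rewrite -{3 4}[v]hsubmxK dot_row lerDl dot_ge0.
Qed.
End Sub.

Section Rot.
Variables (R : realType) (n : nat).
Hypothesis hn : (1 <= n)%N.

Local Notation e0 := (pr 1 (0 : 'rV[R]_n)).

Lemma e0_dot : dot e0 e0 = 1.
Proof. by rewrite dot_e0_pr. Qed.

Lemma householder (u : 'rV[R]_(1 + n)) : dot u u = 1 ->
  exists H : 'M[R]_(1 + n), H *m H^T = 1%:M /\ e0 *m H = u.
Proof.
move=> hu; set w := e0 - u; set s := dot w w.
have [s0|sn0] := eqVneq s 0.
  exists 1%:M; rewrite trmx1 mulmx1 mulmx1; split => //.
  by apply/eqP; rewrite -subr_eq0; apply/eqP; exact: dot_eq0.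
set c := 2 / s; set M := w^T *m w.
have hcs : c * s = 2 by rewrite /c divfK.
have hMT : M^T = M by rewrite /M trmx_mul trmxK.
have hMM : M *m M = s *: M.
  by rewrite /M mulmxA -(mulmxA w^T) dot_mx mul_mx_scalar -scalemxAl.
exists (1%:M - c *: M); split.
  rewrite [(_ - _)^T]linearB /= [(c *: M)^T]linearZ /= trmx1 hMT mulmxBl mul1mx mulmxBr mulmx1.
  rewrite -scalemxAl -scalemxAr scalerA hMM scalerA.
  have -> : c * c * s = c + c by rewrite -mulrA hcs; rewrite /c; field.
  by rewrite scalerDl opprB addrK subrK.
rewrite mulmxBr mulmx1 -scalemxAr /M mulmxA dot_mx mul_scalar_mx scalerA.
have hw : dot e0 w = 1 - dot e0 u by rewrite /w dotBr e0_dot.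
have hs : s = 2 - 2 * dot e0 u.
  rewrite /s /w dotBl !dotBr e0_dot hu (dotC u e0); ring.
have -> : c * dot e0 w = 1.
  rewrite hw /c hs; field.
  by apply/eqP => h; move: sn0; rewrite hs h eqxx.
by rewrite scale1r /w opprB addrC subrK.
Qed.

Lemma orth_det (H : 'M[R]_(1 + n)) : H *m H^T = 1%:M -> \det H = 1 \/ \det H = -1.
Proof.
move=> hH; have : \det H ^+ 2 = 1 by rewrite expr2 -{2}det_tr -det_mulmx hH det1.
by move/eqP; rewrite sqrf_eq1 => /orP [] /eqP; [left|right].
Qed.

Lemma rotation (u : 'rV[R]_(1 + n)) : dot u u = 1 ->
  exists Q : 'M[R]_(1 + n), Q *m Q^T = 1%:M /\ \det Q = 1 /\ e0 *m Q = u.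
Proof.
move=> hu; have [H [hH he]] := householder hu.
have [d1|dm1] := orth_det hH; first by exists H.
have i1 : (0 < n)%N by [].
pose j1 : 'I_(1 + n) := rshift 1 (Ordinal i1).
pose d : 'rV[R]_(1 + n) := \row_i (if i == j1 then -1 else 1).
pose D := diag_mx d.
have hDD : D *m D^T = 1%:M.
  rewrite /D tr_diag_mx mulmx_diag -diag_const_mx; congr diag_mx.
  by apply/rowP => i; rewrite !mxE; case: ifP => _; rewrite ?mulrNN mulr1.
have hdet : \det D = -1.
  rewrite /D det_diag (bigD1 j1) //= big1 ?mulr1; first by rewrite mxE eqxx.
  by move=> i /negbTE hi; rewrite mxE hi.
have he0 : e0 *m D = e0.
  apply/rowP => j; rewrite /D mul_mx_diag mxE [d _ _]mxE.
  case: (eqVneq j j1) => [->|hj]; last by rewrite mulr1.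
  by rewrite /j1 /pr row_mxEr mxE mul0r.
exists (D *m H); split; last split.
- by rewrite trmx_mul mulmxA -(mulmxA D) hH mulmx1 hDD.
- by rewrite det_mulmx hdet dm1 mulrNN mulr1.
- by rewrite mulmxA he0.
Qed.

End Rot.

Section Calc.
Variables (R : realType) (k : nat) (Phi : 'rV[R]_k -> R).
Hypothesis hd : forall y, differentiable Phi y.

Lemma dPhi_dot y v : 'd Phi y v = dot (grad Phi y) v.
Proof.
rewrite {1}(row_sum_delta v) linear_sum dotE; apply: eq_bigr => i _.
by rewrite linearZ /= -deriveE // /grad mxE mulrC.
Qed.

Lemma line_quot (y w : 'rV[R]_k) (s : R) :
  (fun h : R => h^-1 *: (((fun s : R => Phi (y + s *: w)) \o shift s) (h *: 1)
      - (fun s : R => Phi (y + s *: w)) s)) =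
  (fun h : R => h^-1 *: ((Phi \o shift (y + s *: w)) (h *: w) - Phi (y + s *: w))).
Proof.
apply: funext => h /=; congr (_ *: (Phi _ - _)).
by rewrite [h *: 1]mulr1 scalerDl addrCA addrC.
Qed.

Lemma line_derivable (y w : 'rV[R]_k) (s : R) :
  derivable (fun s : R => Phi (y + s *: w)) s 1.
Proof. by rewrite /derivable line_quot; apply: diff_derivable. Qed.

Lemma line_derive (y w : 'rV[R]_k) (s : R) :
  'D_1 (fun s : R => Phi (y + s *: w)) s = dot (grad Phi (y + s *: w)) w.
Proof. by rewrite /derive line_quot -/(derive _ _ _) deriveE // dPhi_dot. Qed.

Lemma segment_mvt (y w : 'rV[R]_k) :
  exists2 c : R, 0 <= c <= 1 & Phi (y + w) - Phi y = dot (grad Phi (y + c *: w)) w.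
Proof.
have := @MVT_segment R (fun s : R => Phi (y + s *: w))
  (fun c : R => dot (grad Phi (y + c *: w)) w) 0 1 ler01.
case.
- move=> x _; apply: DeriveDef; first exact: line_derivable.
  exact: line_derive.
- apply: derivable_within_continuous => x _; exact: line_derivable.
move=> c; rewrite in_itv /= => hc; rewrite scale1r scale0r addr0 subr0 mulr1 => ->.
by exists c.
Qed.

Lemma line_continuous (y w : 'rV[R]_k) (a b : R) :
  {within `[a, b], continuous (fun s : R => Phi (y + s *: w))}.
Proof. by apply: derivable_within_continuous => x _; exact: line_derivable. Qed.

End Calc.

Lemma diff_from (K : numFieldType) (V W : normedModType K) (f : V -> W)
  (df : {linear V -> W}) x : continuous df ->
  (forall eps : K, 0 < eps -> \forall h \near 0, `|f (h + x) - (f x + df h)| <= eps * `|h|) ->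
  differentiable f x /\ 'd f x = df :> (V -> W).
Proof.
move=> dc he.
have ho : f \o shift x = cst (f x) + df +o_ 0 id.
  apply/eqaddoP => eps heps; have := he eps heps; apply: filterS => h /=.
  by [].
have hdu := diff_unique dc ho; split => //.
by apply/diff_locallyP; rewrite hdu; split.
Qed.

Lemma inv_le2 (R : realType) (g a : R) : 0 < g -> g / 2 <= a -> a^-1 <= 2 / g.
Proof.
move=> hg ha; have hg2 : 0 < g / 2 by rewrite divr_gt0.
have ha0 : 0 < a by apply: lt_le_trans ha.
by rewrite -invf_div lef_pV2 // posrE.
Qed.

Lemma num_bound (R : realType) (g A B m q D : R) : 0 < g -> g / 2 <= A -> g / 2 <= B ->
  0 <= m -> m <= D -> `|B - A| <= D -> 0 <= q -> q <= 3 / 2 * g ->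
  `|A^-1| * m + `|(B - A) / (A * B)| * q <= 8 / g * D.
Proof.
move=> hg hA hB m0 hm hab q0 hq.
have hg2 : 0 < g / 2 by rewrite divr_gt0.
have hA0 : 0 < A by apply: lt_le_trans hA.
have hB0 : 0 < B by apply: lt_le_trans hB.
have iA := inv_le2 hg hA; have iB := inv_le2 hg hB.
have iA0 : 0 <= A^-1 by rewrite invr_ge0 ltW.
have iB0 : 0 <= B^-1 by rewrite invr_ge0 ltW.
have t1 : `|A^-1| * m <= 2 / g * D by rewrite ger0_norm // ler_pM.
have t2 : `|(B - A) / (A * B)| * q <= D * (2 / g * (2 / g)) * (3 / 2 * g).
  rewrite normrM normfV normrM (gtr0_norm hA0) (gtr0_norm hB0) invfM.
  have hAB0 : 0 <= A^-1 * B^-1 by apply: mulr_ge0.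
  have hAB : A^-1 * B^-1 <= 2 / g * (2 / g) by apply: ler_pM.
  have h0 : 0 <= `|B - A| * (A^-1 * B^-1) by apply: mulr_ge0.
  apply: (ler_pM h0 q0 _ hq).
  exact: (ler_pM (normr_ge0 _) hAB0 hab hAB).
have -> : 8 / g * D = 2 / g * D + D * (2 / g * (2 / g)) * (3 / 2 * g).
  by field; rewrite gt_eqF.
exact: lerD.
Qed.

Section Main.
Variables (R : realType) (n : nat) (gamma : R) (Phi : 'rV[R]_(1 + n) -> R).
Hypothesis hg0 : 0 < gamma.
Hypothesis hg1 : gamma < 1.
Hypothesis hd : forall y, differentiable Phi y.
Variable H0 : R.
Hypothesis hH : forall x1 x2, enorm (grad Phi x1 - grad Phi x2) <= H0 * enorm (x1 - x2) `^ gamma.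
Variables (x : 'rV[R]_(1 + n)) (delta : R).
Hypothesis hx : Phi x = 0.
Hypothesis hdelta : 0 < delta.
Hypothesis hinf : 0 < grad_inf Phi.
Hypothesis hcond : delta `^ gamma * (holder_semi gamma Phi / grad_inf Phi) <= 1 / 2.

Local Notation S := (holder_semi gamma Phi).
Local Notation gi := (grad_inf Phi).

Let Sset := [set r | exists x1 x2 : 'rV[R]_(1 + n), x1 != x2 /\
         r = enorm (grad Phi x1 - grad Phi x2) / (enorm (x1 - x2)) `^ gamma].

Lemma Sset_ub : has_ubound Sset.
Proof.
exists H0 => r [x1 [x2 [hne ->]]].
have hp : 0 < enorm (x1 - x2) `^ gamma.
  by apply: powR_gt0; apply: enorm_gt0; rewrite subr_eq0.
by rewrite ler_pdivrMr.
Qed.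

Lemma S_ge_elt y1 y2 : y1 != y2 ->
  enorm (grad Phi y1 - grad Phi y2) <= S * enorm (y1 - y2) `^ gamma.
Proof.
move=> hne.
have hp : 0 < enorm (y1 - y2) `^ gamma.
  by apply: powR_gt0; apply: enorm_gt0; rewrite subr_eq0.
rewrite -ler_pdivrMr //; apply: ub_le_sup; first exact: Sset_ub.
by exists y1, y2.
Qed.

Lemma S_ge0 : 0 <= S.
Proof.
have hne : (0 : 'rV[R]_(1 + n)) != pr 1 0.
  apply/eqP => /(congr1 (dot (pr 1 0))); rewrite dotC dot0l dot_e0_pr.
  by move/eqP; rewrite eq_sym oner_eq0.
have hp : 0 < enorm ((0 : 'rV[R]_(1 + n)) - pr 1 0) `^ gamma.
  by apply: powR_gt0; apply: enorm_gt0; rewrite subr_eq0.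
apply: le_trans (ub_le_sup Sset_ub _); last first.
  by exists 0, (pr 1 0); split; [exact: hne| reflexivity].
by rewrite divr_ge0 ?enorm_ge0 // ltW.
Qed.

Lemma S_bound y1 y2 :
  enorm (grad Phi y1 - grad Phi y2) <= S * enorm (y1 - y2) `^ gamma.
Proof.
have [->|hne] := eqVneq y1 y2; last exact: S_ge_elt.
by rewrite subrr enorm0 mulr_ge0 ?S_ge0 ?powR_ge0.
Qed.

Let G := grad Phi x.
Let g := enorm G.

Lemma gi_le : gi <= g.
Proof.
apply: ge_inf; last by exists x.
by exists 0 => r [y [_ ->]]; exact: enorm_ge0.
Qed.

Lemma g_pos : 0 < g.
Proof. exact: lt_le_trans hinf gi_le. Qed.

Lemma dS : delta `^ gamma * S <= g / 2.
Proof.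
have h : delta `^ gamma * S <= gi / 2.
  move: hcond; rewrite mulrA ler_pdivrMr //.
  by move=> h; apply: le_trans h _; rewrite mul1r mulrC.
by apply: le_trans h _; rewrite ler_pM2r // gi_le.
Qed.

Lemma near_grad y : enorm (y - x) < delta -> enorm (grad Phi y - G) <= g / 2.
Proof.
move=> hy; apply: le_trans (S_bound y x) _; apply: le_trans dS.
rewrite mulrC ler_wpM2r ?S_ge0 //.
by apply: ge0_ler_powR; rewrite ?nnegrE ?enorm_ge0 ?ltW.
Qed.

Lemma KL y1 y2 : enorm (y1 - x) < delta -> enorm (y2 - x) < delta ->
  `|Phi y2 - Phi y1 - dot G (y2 - y1)| <= g / 2 * enorm (y2 - y1).
Proof.
move=> h1 h2.
have [c /andP [c0 c1]] := segment_mvt hd y1 (y2 - y1).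
rewrite [y1 + _]addrC subrK => ->; rewrite -dotBl.
apply: le_trans (CS _ _) _; rewrite ler_wpM2r ?enorm_ge0 //.
apply: near_grad.
have -> : y1 + c *: (y2 - y1) - x = (1 - c) *: (y1 - x) + c *: (y2 - x).
  by apply/rowP => i; rewrite !mxE; ring.
apply: le_lt_trans (enormD _ _) _.
rewrite !enormZ (ger0_norm c0) ger0_norm ?subr_ge0 //.
have [->|cpos] := eqVneq c 0; first by rewrite subr0 mul1r mul0r addr0.
have : 0 < c by rewrite lt_neqAle eq_sym cpos.
nra.
Qed.


Variable Q : 'M[R]_(1 + n).
Hypothesis hQ : Q *m Q^T = 1%:M.
Hypothesis hQu : pr 1 0 *m Q = g^-1 *: G.

Definition P t z := Phi (x + pr t z *m Q).
Definition inB t (z : 'rV[R]_n) := enorm (pr t z) < delta.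

Lemma pt_sub t z : (x + pr t z *m Q) - x = pr t z *m Q.
Proof. by rewrite addrC addKr. Qed.

Lemma pt_enorm t z : enorm ((x + pr t z *m Q) - x) = enorm (pr t z).
Proof. by rewrite pt_sub enormQ. Qed.

Lemma pt_diff t1 z1 t2 z2 :
  (x + pr t2 z2 *m Q) - (x + pr t1 z1 *m Q) = pr (t2 - t1) (z2 - z1) *m Q.
Proof. by rewrite opprD addrACA subrr add0r -mulmxBl prB. Qed.

Lemma G_eq : G = g *: (pr 1 0 *m Q).
Proof. by rewrite hQu scalerA divff ?scale1r // gt_eqF // g_pos. Qed.

Lemma dotG v : dot G (v *m Q) = g * dot (pr 1 0) v.
Proof. by rewrite {1}G_eq dotZl dotQ. Qed.

Lemma KLc t1 z1 t2 z2 : inB t1 z1 -> inB t2 z2 ->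
  `|P t2 z2 - P t1 z1 - g * (t2 - t1)| <= g / 2 * enorm (pr (t2 - t1) (z2 - z1)).
Proof.
rewrite /inB => h1 h2.
have := @KL (x + pr t1 z1 *m Q) (x + pr t2 z2 *m Q).
rewrite !pt_enorm pt_diff dotG dot_e0_pr enormQ //.
by move=> /(_ h1 h2).
Qed.

Lemma KLc' t1 z1 t2 z2 : inB t1 z1 -> inB t2 z2 ->
  `|P t2 z2 - P t1 z1 - g * (t2 - t1)| <= g / 2 * (`|t2 - t1| + enorm (z2 - z1)).
Proof.
move=> h1 h2; apply: le_trans (KLc h1 h2) _.
by rewrite ler_wpM2l ?pr_le // divr_ge0 // ltW // g_pos.
Qed.

Lemma mono t1 t2 z : inB t1 z -> inB t2 z -> t1 <= t2 ->
  g / 2 * (t2 - t1) <= P t2 z - P t1 z.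
Proof.
move=> h1 h2 h12; have := KLc' h1 h2; rewrite subrr enorm0 addr0.
rewrite [`|t2 - t1|]ger0_norm ?subr_ge0 //; have := g_pos.
move: (P t2 z) (P t1 z) => a b hg; rewrite ler_norml => /andP [hl _].
nra.
Qed.

Lemma lip t1 z1 t2 z2 : inB t1 z1 -> inB t2 z2 -> P t1 z1 = 0 -> P t2 z2 = 0 ->
  `|t2 - t1| <= enorm (z2 - z1).
Proof.
move=> h1 h2 p1 p2; have := KLc' h1 h2; rewrite p1 p2 subrr sub0r normrN.
rewrite normrM (ger0_norm (ltW g_pos)); have := g_pos.
move: `|t2 - t1| (enorm (z2 - z1)) => a b hg h.
nra.
Qed.


Lemma P_line z : (fun s => P s z) = (fun s => Phi ((x + pr 0 z *m Q) + s *: (pr 1 0 *m Q))).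
Proof.
by apply: funext => s; rewrite /P pr_split mulmxDl -scalemxAl addrA.
Qed.

Lemma inB_between a b c z : inB a z -> inB b z -> a <= c <= b -> inB c z.
Proof.
rewrite /inB => ha hb /andP [hac hcb].
have sa := pr_sq a z; have sb := pr_sq b z; have sc := pr_sq c z.
have A0 := enorm_ge0 (pr a z); have B0 := enorm_ge0 (pr b z);
have C0 := enorm_ge0 (pr c z).
move: (enorm (pr a z)) (enorm (pr b z)) (enorm (pr c z)) (enorm z) ha hb sa sb sc A0 B0 C0
  => A B C E ha hb sa sb sc A0 B0 C0.
have [c0|c0] := leP 0 c.
  have : c ^+ 2 <= b ^+ 2 by rewrite !expr2; nra.
  move=> h; nra.
have : c ^+ 2 <= a ^+ 2 by rewrite !expr2; nra.
move=> h; nra.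
Qed.

Lemma ivt_zero z a b : a <= b -> inB a z -> inB b z -> P a z <= 0 -> 0 <= P b z ->
  exists c, inB c z /\ P c z = 0.
Proof.
move=> hab ha hb pa pb.
have hc : {within `[a, b], continuous (fun s => P s z)}.
  by rewrite P_line; apply: line_continuous.
have [|c hc' Pc] := IVT hab hc (v := 0).
  by rewrite ge_min le_max pa pb orbT.
exists c; split => //; apply: (inB_between ha hb).
by move: hc'; rewrite in_itv.
Qed.

Definition U : set 'rV[R]_n := [set z | exists t, inB t z /\ P t z = 0].
Definition f (z : 'rV[R]_n) : R :=
  if `[< U z >] then xget 0 (fun t => inB t z /\ P t z = 0)
  else if `[< exists t, inB t z /\ P t z < 0 >] then delta + 1 else - (delta + 1).

Lemma fU z : U z -> inB (f z) z /\ P (f z) z = 0.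
Proof. by move=> hz; rewrite /f (asboolT hz); exact: (xgetPex 0 hz). Qed.

Lemma inB_abs t z : inB t z -> `|t| < delta.
Proof. by move=> h; apply: le_lt_trans (pr_ge_t _ _) h. Qed.

Lemma zero_iff t z : inB t z -> (P t z = 0 <-> U z /\ t = f z).
Proof.
move=> ht; split => [p0|[hz ->]]; last by case: (fU hz).
have hz : U z by exists t.
split => //; have [h1 h2] := fU hz.
have := lip ht h1 p0 h2; rewrite subrr enorm0 normr_le0 subr_eq0 => /eqP ->.
by [].
Qed.

Lemma neg_iff t z : inB t z -> (P t z < 0 <-> t < f z).
Proof.
move=> ht; have hg := g_pos.
case: (pselect (U z)) => hz.
  have [h1 h2] := fU hz; split => hp.
    rewrite ltNge; apply/negP => hle.
    have := mono h1 ht hle; rewrite h2 subr0; nra.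
  have := mono ht h1 (ltW hp); rewrite h2; nra.
have habs := inB_abs ht.
rewrite /f (asboolF hz).
case: (pselect (exists t, inB t z /\ P t z < 0)) => hn.
  rewrite (asboolT hn); split => _; first by move: habs; rewrite ltr_norml; lra.
  rewrite ltNge; apply/negP => hp.
  have [hp0|hp0] := eqVneq (P t z) 0; first by apply: hz; exists t.
  have {}hp : 0 < P t z by rewrite lt_neqAle eq_sym hp0 hp.
  case: hn => t' [ht' pt'].
  have [htt|htt] := leP t' t.
    have [c hc] := ivt_zero htt ht' ht (ltW pt') (ltW hp).
    by apply: hz; exists c.
  have := mono ht ht' (ltW htt); nra.
rewrite (asboolF hn); split => hp; first by exfalso; apply: hn; exists t.
by move: habs; rewrite ltr_norml; lra.
Qed.


Lemma U_ball z0 : U z0 -> exists2 e, 0 < e & forall z, enorm (z - z0) < e -> U z.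
Proof.
move=> hz0; have [h1 h2] := fU hz0; set t0 := f z0 in h1 h2.
have hr : 0 < delta - enorm (pr t0 z0) by rewrite subr_gt0.
set eps := (delta - enorm (pr t0 z0)) / 4.
have he : 0 < eps by rewrite /eps divr_gt0.
exists eps => // z hz.
have hg := g_pos.
have inB_s s : `|s| <= eps -> inB (t0 + s) z.
  move=> hs; rewrite /inB.
  have -> : pr (t0 + s) z = pr t0 z0 + pr s (z - z0) by rewrite prD [z0 + _]addrC subrK.
  apply: le_lt_trans (enormD _ _) _; apply: le_lt_trans (lerD (lexx _) (pr_le _ _)) _.
  rewrite /eps in hs hz; lra.
have hp : inB (t0 + eps) z by apply: inB_s; rewrite ger0_norm ?(ltW he).
have hm : inB (t0 + - eps) z by apply: inB_s; rewrite normrN ger0_norm ?(ltW he).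
have Pp : 0 <= P (t0 + eps) z.
  have := KLc' h1 hp; rewrite h2 subr0 (_ : t0 + eps - t0 = eps); last by ring.
  rewrite [`|eps|]ger0_norm; last exact: ltW he.
  rewrite ler_norml => /andP [hl _].
  nra.
have Pm : P (t0 + - eps) z <= 0.
  have := KLc' h1 hm; rewrite h2 subr0 (_ : t0 + - eps - t0 = - eps); last by ring.
  rewrite normrN [`|eps|]ger0_norm; last exact: ltW he.
  rewrite ler_norml => /andP [_ hl].
  nra.
have hle : t0 + - eps <= t0 + eps by lra.
have [c [hc pc]] := ivt_zero hle hm hp Pm Pp.
by exists c.
Qed.

Lemma U_open : open U.
Proof.
rewrite openE => z0 hz0; have [e he hb] := U_ball hz0.
suff : nbhs z0 U by []. rewrite -nbhs_nbhs_norm.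
have hn : 0 < n%:R + 1 :> R by rewrite ltr_wpDl ?ler0n.
exists (e / (n%:R + 1)); first by rewrite /= divr_gt0.
move=> z /= hz; apply: hb; apply: le_lt_trans (enorm_le_mxnorm _) _.
rewrite -normrN opprB.
apply: le_lt_trans (_ : n%:R * `|z0 - z| <= (n%:R + 1) * `|z0 - z|) _.
  by rewrite ler_wpM2r ?normr_ge0 // lerDl.
by rewrite mulrC -ltr_pdivlMr.
Qed.


Definition y0 z0 := x + pr (f z0) z0 *m Q.
Definition bvec z0 := grad Phi (y0 z0) *m Q^T.
Definition a0 z0 := lsubmx (bvec z0) 0 0.
Definition ap z0 := rsubmx (bvec z0).
Definition L z0 (h : 'rV[R]_n) : R := - dot (ap z0) h / a0 z0.

Lemma u_norm : enorm (pr 1 0 *m Q) = 1.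
Proof. by rewrite enormQ // enormE dot_e0_pr sqrtr1. Qed.

Lemma y0_near z0 : U z0 -> enorm (y0 z0 - x) < delta.
Proof. by move=> hz; rewrite /y0 pt_enorm; case: (fU hz). Qed.

Lemma a0_ge z0 : U z0 -> g / 2 <= a0 z0.
Proof.
move=> hz.
have -> : a0 z0 = dot (grad Phi (y0 z0)) (pr 1 0 *m Q).
  by rewrite dotQT dot_pr mulr1 dotC dot0l addr0.
have -> : grad Phi (y0 z0) = G + (grad Phi (y0 z0) - G) by rewrite addrC subrK.
rewrite dotDl {1}G_eq dotZl dotQ // dot_e0_pr mulr1.
have := CS (grad Phi (y0 z0) - G) (pr 1 0 *m Q); rewrite u_norm mulr1.
have := near_grad (y0_near hz).
move: (dot _ _) (enorm _) => d e h1; rewrite ler_norml => /andP [h2 _].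
lra.
Qed.

Lemma a0_pos z0 : U z0 -> 0 < a0 z0.
Proof. by move=> hz; apply: lt_le_trans (a0_ge hz); rewrite divr_gt0 // g_pos. Qed.

Lemma dPhi_pt z0 t h : 'd Phi (y0 z0) (pr t h *m Q) = a0 z0 * t + dot (ap z0) h.
Proof. by rewrite dPhi_dot // dotQT dot_pr. Qed.

Lemma L_linear z0 : linear (L z0).
Proof. by move=> a u v; rewrite /L dotDr dotZr /GRing.scale /=; ring. Qed.

Lemma L_bound z0 h : `|L z0 h| <= enorm (ap z0) * enorm h / `|a0 z0|.
Proof.
by rewrite /L normrM normrN normfV ler_wpM2r ?invr_ge0 ?normr_ge0 // CS.
Qed.


Lemma f_diff z0 : U z0 -> differentiable f z0 /\ ('d f z0 : 'rV[R]_n -> R) = L z0.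
Proof.
move=> hz.
pose LM := GRing.isLinear.Build _ _ _ _ _ (L_linear z0).
pose LL : {linear 'rV[R]_n -> R} := HB.pack (L z0) LM.
have Lc : continuous LL.
  apply/linear_bounded_continuous/bounded_funP => r.
  exists (enorm (ap z0) * (n%:R * r) / `|a0 z0|) => h hh.
  apply: le_trans (L_bound z0 h) _; rewrite ler_wpM2r ?invr_ge0 ?normr_ge0 //.
  rewrite ler_wpM2l ?enorm_ge0 //; apply: le_trans (enorm_le_mxnorm h) _.
  by rewrite ler_wpM2l ?ler0n.
apply: (diff_from Lc) => eps heps; rewrite /=.
have hg := g_pos; have hA := a0_ge hz; have hA0 := a0_pos hz.
have hn : 0 < n%:R + 1 :> R by rewrite ltr_wpDl ?ler0n.
set eps1 := eps * g / (4 * (n%:R + 1)).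
have he1 : 0 < eps1 by rewrite /eps1 !divr_gt0 ?mulr_gt0.
have := diff_locally (hd (y0 z0)); move/eqaddoP => /(_ eps1 he1).
case/nbhs_norm0P => r1 hr1 Hr1.
have [e0 he0 hb] := U_ball hz.
apply/nbhs_norm0P.
exists (Num.min (r1 / (2 * (n%:R + 1))) (e0 / (n%:R + 1))).
  by rewrite /= lt_min !divr_gt0 ?mulr_gt0.
move=> h /=; rewrite lt_min => /andP [hh1 hh2].
have hhn : enorm h <= (n%:R + 1) * `|h|.
  apply: le_trans (enorm_le_mxnorm h) _.
  by rewrite ler_wpM2r ?normr_ge0 // lerDl.
have hz1 : U (h + z0).
  apply: hb; rewrite addrK; apply: le_lt_trans hhn _.
  by rewrite mulrC -ltr_pdivlMr.
have [i1 p1] := fU hz1; have [i0 p0] := fU hz.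
have hlip := lip i0 i1 p0 p1; rewrite addrK in hlip.
set t1 := f (h + z0) in i1 p1 hlip *; set t0 := f z0 in i0 p0 hlip *.
set k := pr (t1 - t0) h *m Q.
have hk : `|k| <= 2 * (n%:R + 1) * `|h|.
  apply: le_trans (mxnorm_le_enorm _) _; rewrite enormQ //.
  apply: le_trans (pr_le _ _) _; lra.
have hkr : `|k| < r1.
  apply: le_lt_trans hk _; move: hh1; rewrite ltr_pdivlMr ?mulr_gt0 // => hh1.
  nra.
have := Hr1 k.
move=> /(_ hkr) hX0.
have hX : `|Phi (k + y0 z0) - (Phi (y0 z0) + 'd Phi (y0 z0) k)| <= eps1 * `|k|.
  exact: hX0.
clear hX0.
have e1 : k + y0 z0 = x + pr t1 (h + z0) *m Q.
  by rewrite /k /y0 addrCA -mulmxDl prD subrK.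
rewrite e1 -/(P t1 (h + z0)) p1 (_ : Phi (y0 z0) = 0) in hX; last by rewrite /y0 -/(P _ _).
rewrite dPhi_pt sub0r add0r normrN in hX.
have -> : t1 - (t0 + L z0 h) = (a0 z0 * (t1 - t0) + dot (ap z0) h) / a0 z0.
  by rewrite /L; field; rewrite gt_eqF.
rewrite normrM normfV (gtr0_norm hA0) ler_pdivrMr //.
apply: le_trans hX _; apply: le_trans (ler_wpM2l (ltW he1) hk) _.
have -> : eps1 * (2 * (n%:R + 1) * `|h|) = eps * (g / 2) * `|h|.
  by rewrite /eps1; field; rewrite gt_eqF.
have : 0 <= eps * `|h| by rewrite mulr_ge0 ?normr_ge0 ?(ltW heps).
rewrite mulrAC; move: (eps * `|h|) => q; nra.
Qed.


Lemma dot_delta k (v : 'rV[R]_k) i : dot v (delta_mx 0 i) = v 0 i.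
Proof.
rewrite dotE (bigD1 i) //= big1 ?addr0 => [|j hj]; rewrite mxE.
  by rewrite !eqxx mulr1.
by rewrite (negbTE hj) andbF mulr0.
Qed.

Lemma grad_f z0 : U z0 -> grad f z0 = - (a0 z0)^-1 *: ap z0.
Proof.
move=> hz; have [fd fdE] := f_diff hz.
apply/rowP => i; rewrite /grad mxE [RHS]mxE deriveE // fdE /L dot_delta.
by rewrite mulrC mulNr mulrN.
Qed.

Lemma QT_orth : Q^T *m Q^T^T = 1%:M.
Proof. by rewrite trmxK; apply: mulmx1C. Qed.

Lemma grad_bound y : enorm (y - x) < delta -> enorm (grad Phi y) <= 3 / 2 * g.
Proof.
move=> hy; have h := near_grad hy.
have e : grad Phi y = G + (grad Phi y - G) by rewrite addrC subrK.
rewrite e; apply: le_trans (enormD _ _) _; rewrite -/g; lra.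
Qed.

Lemma f_holder z1 z2 : U z1 -> U z2 ->
  enorm (grad f z1 - grad f z2) <= (16 * S / g) * enorm (z1 - z2) `^ gamma.
Proof.
move=> h1 h2; rewrite (grad_f h1) (grad_f h2).
have hg := g_pos; have hS := S_ge0.
have hA := a0_ge h1; have hB := a0_ge h2; have hA0 := a0_pos h1; have hB0 := a0_pos h2.
set A := a0 z1 in hA hA0 *; set B := a0 z2 in hB hB0 *.
set D := enorm (grad Phi (y0 z1) - grad Phi (y0 z2)).
have D0 : 0 <= D by apply: enorm_ge0.
have eb : enorm (bvec z1 - bvec z2) = D by rewrite /bvec -mulmxBl enormQ // QT_orth.
have hv : enorm (ap z1 - ap z2) <= D by rewrite -eb /ap -raddfB; apply: enorm_rsub.
have hab : `|B - A| <= D.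
  rewrite -eb distrC /A /B /a0 (_ : forall u v : 'rV[R]_1, u 0 0 - v 0 0 = (u - v) 0 0).
    by rewrite -raddfB; apply: enorm_lsub.
  by move=> u v; rewrite !mxE.
have hv2 : enorm (ap z2) <= 3 / 2 * g.
  apply: le_trans (enorm_rsub _) _; rewrite /bvec enormQ ?QT_orth //.
  exact/grad_bound/y0_near.
have e1 : - A^-1 *: ap z1 - - B^-1 *: ap z2 =
    - (A^-1 *: (ap z1 - ap z2) + ((B - A) / (A * B)) *: ap z2).
  apply/rowP => i; rewrite !mxE; field.
  by rewrite (gt_eqF hA0) (gt_eqF hB0).
rewrite e1 enormN.
have step1 : enorm (A^-1 *: (ap z1 - ap z2) + ((B - A) / (A * B)) *: ap z2) <= 8 / g * D.
  apply: le_trans (enormD _ _) _; rewrite !enormZ.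
  by apply: num_bound => //; apply: enorm_ge0.
apply: le_trans step1 _.
have hy : enorm (y0 z1 - y0 z2) <= 2 * enorm (z1 - z2).
  have [i1 p1] := fU h1; have [i2 p2] := fU h2.
  rewrite /y0 pt_diff enormQ //; apply: le_trans (pr_le _ _) _.
  have := lip i2 i1 p2 p1; lra.
have hD : D <= S * (2 * enorm (z1 - z2) `^ gamma).
  apply: le_trans (S_bound _ _) _; rewrite ler_wpM2l //.
  apply: (@le_trans _ _ ((2 * enorm (z1 - z2)) `^ gamma)).
    apply: ge0_ler_powR; first exact: ltW.
    - by rewrite nnegrE; apply: enorm_ge0.
    - by rewrite nnegrE mulr_ge0 // enorm_ge0.
    - exact: hy.
  rewrite powRM ?enorm_ge0 //; apply: ler_wpM2r; first exact: powR_ge0.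
  have h22 : (2 : R) `^ gamma <= 2 `^ 1 by apply: ler_powR; [rewrite ler1n | exact: ltW].
  by rewrite powRr1 in h22.
have -> : 16 * S / g * enorm (z1 - z2) `^ gamma = 8 / g * (S * (2 * enorm (z1 - z2) `^ gamma)).
  by field; rewrite gt_eqF.
by rewrite ler_wpM2l // divr_ge0 // ltW.
Qed.

End Main.

Unset Implicit Arguments.
Unset Strict Implicit.

Theorem lemma6p4 (R : realType) (n : nat) (hn : (1 <= n)%N)
  (gamma : R) (hg0 : 0 < gamma) (hg1 : gamma < 1)
  (D : set 'rV[R]_n.+1) (Phi : 'rV[R]_n.+1 -> R)
  (hPhi : C1gamma_on setT gamma Phi)
  (hD : D = [set x | Phi x < 0])
  (hbd : closure D `\` interior D = [set x | Phi x = 0])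
  (hgrad : forall x, Phi x = 0 -> grad Phi x != 0)
  (hconn : connected D)
  (hinf : 0 < grad_inf Phi)
  (delta : R) (hdelta : 0 < delta)
  (hcond : delta `^ gamma * (holder_semi gamma Phi / grad_inf Phi) <= 1 / 2) :
  forall x : 'rV[R]_n.+1, Phi x = 0 ->
  exists Q : 'M[R]_n.+1, Q *m Q^T = 1%:M /\ \det Q = 1 /\
  exists (U : set 'rV[R]_n) (f : 'rV[R]_n -> R),
    open U /\ C1gamma_on U gamma f /\
    forall (t : R) (z : 'rV[R]_n),
      enorm (row_mx (t%:M : 'rV[R]_1) z) < delta ->
      (Phi (x + row_mx (t%:M : 'rV[R]_1) z *m Q) = 0 <-> (U z /\ t = f z)) /\
      (Phi (x + row_mx (t%:M : 'rV[R]_1) z *m Q) < 0 <-> t < f z).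
Proof.
move=> x hx.
have hd : forall y, differentiable Phi y by move=> y; apply: hPhi.1.
have [H0 hH0] := hPhi.2.
have hH : forall x1 x2 : 'rV[R]_(1 + n),
    enorm (grad Phi x1 - grad Phi x2) <= H0 * enorm (x1 - x2) `^ gamma.
  by move=> x1 x2; apply: hH0.
set G := grad Phi x; set g := enorm G.
have hgi : grad_inf Phi <= g.
  apply: ge_inf; last by exists x.
  by exists 0 => r [y [_ ->]]; exact: enorm_ge0.
have hg : 0 < g by apply: lt_le_trans hinf hgi.
have hu : dot (g^-1 *: G) (g^-1 *: G) = 1.
  rewrite dotZl dotZr -enorm_sq -/g mulrA -expr2 -exprMn mulVf ?expr1n //.
  by rewrite gt_eqF.
have [Q [hQ [hdet hQu]]] := rotation hn hu.
exists Q; split => //; split => //.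
exists (U Phi x delta Q), (f Phi x delta Q); split.
  exact: (U_open hg0 hd hH hx hdelta hinf hcond hQ hQu).
split.
  split; first by move=> z hz; exact: (f_diff hg0 hd hH hx hdelta hinf hcond hQ hQu hz).1.
  exists (16 * holder_semi gamma Phi / g) => z1 z2 h1 h2.
  exact: (f_holder hg0 hg1 hd hH hx hdelta hinf hcond hQ hQu h1 h2).
move=> t z ht; split.
  exact: (zero_iff hg0 hd hH hx hdelta hinf hcond hQ hQu ht).
exact: (neg_iff hg0 hd hH hx hdelta hinf hcond hQ hQu ht).
Qed.
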